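(* For every LCNF formula $\Phi$ and every variable $x$, $\mathsf{MCS}(\mathsf{bve}(\Phi, x)) = \mathsf{MCS}(\Phi)$.
   Context: Fix a countable set $Lbls$ of labels. A labelled clause $C^L$ is a pair of a clause $C$ (a finite set of literals) and a finite set $L \subseteq Lbls$. An LCNF formula $\Phi$ is a finite set of labelled clauses; $Cls(\Phi) = \{C : C^L \in \Phi\}$ and $Lbls(\Phi) = \bigcup_{C^L\in\Phi} L$. $\Phi$ is satisfiable iff $Cls(\Phi)$ is. For $M \subseteq Lbls(\Phi)$, the induced subformula is $\Phi|_M = \{C^L \in \Phi : L \subseteq M\}$. A set $R \subseteq Lbls(\Phi)$ is an MCS of $\Phi$ if (i) $\Phi|_{Lbls(\Phi)\setminus R}$ is satisfiable and (ii) for every $l \in R$, $\Phi|_{(Lbls(\Phi)\setminus R)\cup\{l\}}$ is unsatisfiable; $\mathsf{MCS}(\Phi)$ is the set of all MCSes of $\Phi$. The resolvent of $(x \vee A)^{L_1}$ and $(\neg x \vee B)^{L_2}$ on $x$ is $(A \vee B)^{L_1\cup L_2}$. For an LCNF $\Phi$, let $\Phi_x$ (resp. $\Phi_{\neg x}$) be the set of its labelled clauses containing the literal $x$ (resp. $\neg x$), and $\Phi_x \otimes_x \Phi_{\neg x}$ the set of all resolvents on $x$ of a clause of $\Phi_x$ with a clause of $\Phi_{\neg x}$. Define $\mathsf{ve}(\Phi,x) = (\Phi \setminus (\Phi_x \cup \Phi_{\neg x})) \cup (\Phi_x \otimes_x \Phi_{\neg x})$ and $\mathsf{bve}(\Phi,x)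 = \mathsf{ve}(\Phi,x)$ if $|\mathsf{ve}(\Phi,x)| < |\Phi|$ (number of labelled clauses), and $\mathsf{bve}(\Phi,x) = \Phi$ otherwise. *)

(* Defs.v *)
From HB Require Import structures.
From mathcomp Require Import all_boot all_order.
From mathcomp Require Import finmap.

Set Implicit Arguments.
Unset Strict Implicit.
Unset Printing Implicit Defensive.

Local Open Scope fset_scope.

Section LCNF.
Variables (V Lbl : countType).

(* A literal is a variable with a polarity: (x, true) = x, (x, false) = ~x. *)
Definition lit := (V * bool)%type.
Definition clause := {fset lit}.
Definition lclause := (clause * {fset Lbl})%type.
Definition lcnf := {fset lclause}.

Definition Cls (Phi : lcnf) : {fset clause} := [fset c.1 | c in Phi].
Definition Lbls (Phi : lcnf) : {fset Lbl} := \bigcup_(c <- Phi) c.2.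

Definition sat_lit (a : V -> bool) (l : lit) : bool := a l.1 == l.2.
Definition sat_clause (a : V -> bool) (C : clause) : Prop :=
  exists2 l, l \in C & sat_lit a l.
Definition sat_clauses (S : {fset clause}) : Prop :=
  exists a : V -> bool, forall C, C \in S -> sat_clause a C.
Definition satisfiable (Phi : lcnf) : Prop := sat_clauses (Cls Phi).

Definition induced (Phi : lcnf) (M : {fset Lbl}) : lcnf :=
  [fset c in Phi | c.2 `<=` M].

Definition is_MCS (Phi : lcnf) (R : {fset Lbl}) : Prop :=
  [/\ R `<=` Lbls Phi,
      satisfiable (induced Phi (Lbls Phi `\` R)) &
      forall l, l \in R ->
        ~ satisfiable (induced Phi ((Lbls Phi `\` R) `|` [fset l]))].

Definition occ_pos (Phi : lcnf) (x : V) : lcnf := [fset c in Phi | (x, true) \in c.1].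
Definition occ_neg (Phi : lcnf) (x : V) : lcnf := [fset c in Phi | (x, false) \in c.1].

Definition resolvent (x : V) (c1 c2 : lclause) : lclause :=
  (((c1.1 `\ (x, true)) `|` (c2.1 `\ (x, false))), c1.2 `|` c2.2).

Definition resolvents (x : V) (P N : lcnf) : lcnf :=
  [fset resolvent x c1 c2 | c1 in P, c2 in N].

Definition ve (Phi : lcnf) (x : V) : lcnf :=
  (Phi `\` (occ_pos Phi x `|` occ_neg Phi x)) `|`
  resolvents x (occ_pos Phi x) (occ_neg Phi x).

Definition bve (Phi : lcnf) (x : V) : lcnf :=
  if (#|` ve Phi x| < #|` Phi|)%N then ve Phi x else Phi.

End LCNF.

(* Main.v *)
Require Import Defs.
From mathcomp Require Import all_boot all_order.
From mathcomp Require Import finmap.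
From Stdlib Require Import Classical.

Set Implicit Arguments.
Unset Strict Implicit.
Unset Printing Implicit Defensive.
Local Open Scope fset_scope.

Section Proofs.
Variables (V Lbl : countType).
Implicit Types (Phi Psi : lcnf V Lbl) (M : {fset Lbl}).

Lemma satE Psi : satisfiable Psi <->
  exists a : V -> bool, forall c, c \in Psi -> sat_clause a c.1.
Proof.
split=> [[a Ha]|[a Ha]]; exists a.
  by move=> c cP; apply: Ha; apply/imfsetP; exists c.
by move=> C /imfsetP [c cP ->]; apply: Ha.
Qed.

Lemma in_induced Psi M c : (c \in induced Psi M) = (c \in Psi) && (c.2 `<=` M).
Proof. by rewrite /induced !inE. Qed.

Lemma lbl_sub Psi c : c \in Psi -> c.2 `<=` Lbls Psi.
Proof. by move=> cP; rewrite /Lbls; apply: bigfcup_sup. Qed.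

Lemma induced_cap Psi M : induced Psi M = induced Psi (M `&` Lbls Psi).
Proof.
apply/fsetP=> c; rewrite !in_induced fsubsetI.
by case cP: (c \in Psi) => //=; rewrite lbl_sub // andbT.
Qed.

Lemma in_ve Phi x c : c \in ve Phi x ->
  (c \in Phi /\ (x, true) \notin c.1 /\ (x, false) \notin c.1) \/
  exists2 c1, c1 \in occ_pos Phi x & exists2 c2, c2 \in occ_neg Phi x & c = resolvent x c1 c2.
Proof.
rewrite /ve in_fsetU in_fsetD in_fsetU => /orP [/andP [H cP]|H].
  left; split=> //; move: H; rewrite /occ_pos /occ_neg !inE cP /=.
  by case: ((x, true) \in c.1); case: ((x, false) \in c.1).
by right; move/imfset2P: H => [c1 H1 [c2 H2 ->]]; exists c1 => //; exists c2.
Qed.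

Lemma resolvent_in Phi x c1 c2 : c1 \in occ_pos Phi x -> c2 \in occ_neg Phi x ->
  resolvent x c1 c2 \in ve Phi x.
Proof.
move=> H1 H2; rewrite /ve in_fsetU; apply/orP; right.
by apply/imfset2P; exists c1 => //; exists c2.
Qed.

Lemma nx_in_ve Phi x c : c \in Phi -> (x, true) \notin c.1 -> (x, false) \notin c.1 ->
  c \in ve Phi x.
Proof.
move=> cP h1 h2; rewrite /ve in_fsetU in_fsetD in_fsetU /occ_pos /occ_neg !inE cP.
by rewrite (negbTE h1) (negbTE h2).
Qed.

Lemma Lbls_ve Phi x : Lbls (ve Phi x) `<=` Lbls Phi.
Proof.
apply/fsubsetP=> l /bigfcupP [c /andP [cV _] lc].
case: (in_ve cV) => [[cP _]|[c1 H1 [c2 H2 E]]].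
  exact: (fsubsetP (lbl_sub cP)).
move: H1 H2 lc; rewrite E /occ_pos /occ_neg !inE /= => /andP [P1 _] /andP [P2 _].
by case/orP => ?; [apply: (fsubsetP (lbl_sub P1)) | apply: (fsubsetP (lbl_sub P2))].
Qed.

Definition upd (a : V -> bool) (x : V) (b : bool) := fun v => if v == x then b else a v.

Lemma lit_cases (x : V) (l : lit V) : l != (x, true) -> l != (x, false) -> l.1 != x.
Proof.
case: l => v s /= h1 h2; apply/eqP => E; subst v.
by case: s h1 h2; rewrite eqxx.
Qed.

Lemma sat_upd a x b (l : lit V) : l.1 != x -> sat_lit (upd a x b) l = sat_lit a l.
Proof. by rewrite /sat_lit /upd => /negbTE ->. Qed.

Lemma sat_ve Phi x M :
  satisfiable (induced (ve Phi x) M) <-> satisfiable (induced Phi M).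
Proof.
rewrite !satE; split.
- move=> [a Ha].
  have Hnx : forall b c, c \in Phi -> c.2 `<=` M -> (x, true) \notin c.1 ->
      (x, false) \notin c.1 -> sat_clause (upd a x b) c.1.
    move=> b c cP cM h1 h2.
    have [l lc sl] : sat_clause a c.1 by apply: Ha; rewrite in_induced nx_in_ve.
    exists l => //; rewrite sat_upd //; apply: lit_cases.
      by apply: contraNneq h1 => <-.
    by apply: contraNneq h2 => <-.
  case: (classic (forall c, c \in induced Phi M -> sat_clause (upd a x false) c.1)) => H0.
    by exists (upd a x false).
  have [c1 Hc1] := not_all_ex_not _ _ H0.
  have [/[dup] c1in + nsat1] := imply_to_and _ _ Hc1.
  rewrite in_induced => /andP [c1P c1M].
  have n1 : (x, false) \notin c1.1.
    apply/negP=> h; apply: nsat1; exists (x, false) => //.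
    by rewrite /sat_lit /upd /= eqxx.
  have p1 : (x, true) \in c1.1.
    apply/negPn/negP=> h; apply: nsat1; exact: Hnx.
  exists (upd a x true) => c; rewrite in_induced => /andP [cP cM].
  case: (boolP ((x, true) \in c.1)) => ht.
    by exists (x, true) => //; rewrite /sat_lit /upd /= eqxx.
  case: (boolP ((x, false) \in c.1)) => hf; last exact: Hnx.
  have r_in : resolvent x c1 c \in induced (ve Phi x) M.
    rewrite in_induced resolvent_in /=; last 2 first.
    - by rewrite /occ_pos !inE c1P.
    - by rewrite /occ_neg !inE cP.
    by rewrite fsubUset c1M cM.
  have [l] := Ha _ r_in.
  rewrite /= in_fsetU !in_fsetD1 => /orP [/andP [lt lc1]|/andP [lf lc]] sl.
    exfalso; apply: nsat1; exists l => //; rewrite sat_upd //.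
    apply: lit_cases => //; by apply: contraTneq lc1 => ->.
  exists l => //; rewrite sat_upd //.
  apply: lit_cases => //; by apply: contraNneq ht => <-.
- move=> [a Ha]; exists a => c; rewrite in_induced => /andP [cV cM].
  case: (in_ve cV) => [[cP _]|[c1 H1 [c2 H2 E]]].
    by apply: Ha; rewrite in_induced cP.
  move: H1 H2 cM; rewrite E /occ_pos /occ_neg !inE /= fsubUset.
  move=> /andP [P1 t1] /andP [P2 f2] /andP [M1 M2].
  have [l1 l1c s1] : sat_clause a c1.1 by apply: Ha; rewrite in_induced P1.
  have [l2 l2c s2] : sat_clause a c2.1 by apply: Ha; rewrite in_induced P2.
  case ax: (a x).
    exists l2; last by [].
    rewrite in_fsetU in_fsetD1 in_fsetD1 l2c andbT; apply/orP; right.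
    by apply: contraTneq s2 => ->; rewrite /sat_lit /= ax.
  exists l1; last by [].
  rewrite in_fsetU in_fsetD1 l1c andbT; apply/orP; left.
  by apply: contraTneq s1 => ->; rewrite /sat_lit /= ax.
Qed.
Lemma setE1 (L L' R : {fset Lbl}) : L' `<=` L -> (L `\` R) `&` L' = L' `\` R.
Proof.
move=> sub; apply/fsetP=> z; rewrite !inE.
have := fsubsetP sub z; case: (z \in L'); case: (z \in L); case: (z \in R) => //=.
by move=> /(_ isT).
Qed.

Lemma setE2 (L L' R : {fset Lbl}) l : L' `<=` L -> l \in L' ->
  ((L `\` R) `|` [fset l]) `&` L' = (L' `\` R) `|` [fset l].
Proof.
move=> sub lL; apply/fsetP=> z; rewrite !inE.
case: (eqVneq z l) => [->|_]; first by rewrite lL !orbT.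
rewrite !orbF; have := fsubsetP sub z; case: (z \in L'); case: (z \in L); case: (z \in R) => //=.
by move=> /(_ isT).
Qed.

Lemma setE3 (L L' R : {fset Lbl}) l : L' `<=` L -> l \notin L' ->
  ((L `\` R) `|` [fset l]) `&` L' = (L' `\` R).
Proof.
move=> sub lL; apply/fsetP=> z; rewrite !inE.
case: (eqVneq z l) => [->|_]; first by rewrite (negbTE lL) !andbF.
rewrite !orbF; have := fsubsetP sub z; case: (z \in L'); case: (z \in L); case: (z \in R) => //=.
by move=> /(_ isT).
Qed.

Lemma key Phi x M : satisfiable (induced Phi M) <->
  satisfiable (induced Phi (M `&` Lbls (ve Phi x))).
Proof.
have E := induced_cap (ve Phi x) M.
split=> H.
  apply: (proj1 (sat_ve Phi x _)); rewrite -E; exact: (proj2 (sat_ve Phi x _)).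
apply: (proj1 (sat_ve Phi x _)); rewrite E; exact: (proj2 (sat_ve Phi x _)).
Qed.

Lemma ve_MCS Phi x R : is_MCS (ve Phi x) R <-> is_MCS Phi R.
Proof.
have sub := Lbls_ve Phi x.
have K := key Phi x.
have S := sat_ve Phi x.
move: sub K; set L := Lbls Phi; set L' := Lbls (ve Phi x) => sub K.
split=> [[RL Hs Hu]|[RL Hs Hu]]; split.
- exact: fsubset_trans RL sub.
- by apply/K; rewrite setE1 //; apply/S.
- move=> l lR /K; have lL' := fsubsetP RL l lR.
  by rewrite setE2 // => /S; apply: Hu.
- apply/fsubsetP=> l lR; apply/negPn/negP => lL'.
  by apply: (Hu l lR); apply/K; rewrite setE3 // -(setE1 R sub); exact: (proj1 (K _) Hs).
- by apply/S; rewrite -(setE1 R sub); exact: (proj1 (K _) Hs).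
- move=> l lR lL'.
  have lin : l \in L'.
    apply/negPn/negP => lL''.
    by apply: (Hu l lR); apply/K; rewrite setE3 // -(setE1 R sub); exact: (proj1 (K _) Hs).
  apply: (Hu l lR); apply/K; rewrite setE2 //; exact/S.
Qed.

End Proofs.

Theorem proposition2 (V Lbl : countType) (Phi : lcnf V Lbl) (x : V)
    (R : {fset Lbl}) :
  is_MCS (bve Phi x) R <-> is_MCS Phi R.
Proof.
rewrite /bve; case: ifP => _; last by [].
exact: ve_MCS.
Qed.
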